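(* Let $T$ be an isometry of a compact metric space $(X,d)$ and let $\mu$ be an ergodic $T$-invariant Borel probability. Then for all $\alpha\in(1,\infty)$, $\delta>0$, $\kappa>\kappa'>0$ and $N\in\mathbb{N}$, \[\min_{\mu'}\max_{U:\,\mu'(U)\ge\kappa}\mathrm{cov}_{\kappa'}((U,d,\mu'),2\delta)\ \le\ \mathrm{BICOV}_{\alpha,\kappa,\kappa',\delta N}\big(X,d^{\mathbf{X}}_{[-N;0)},d^{\mathbf{X}}_{[0;N)},\mu\big)\ \le\ \min_{\mu'}\max_{U:\,\mu'(U)\ge\kappa}\mathrm{cov}_{\kappa'}((U,d,\mu'),\delta),\] where in both outer expressions the minimum is over Borel probabilities $\mu'$ on $X$ with $\|d\mu'/d\mu\|_\infty\le\alpha$ and the maximum over Borel $U\subseteq X$.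
   Context: $d^{\mathbf{X}}_F(x,x')=\sum_{n\in F}d(T^nx,T^nx')$. $B^d_r(x)=\{y:d(x,y)<r\}$, $B^d_r(F)=\bigcup_{x\in F}B^d_r(x)$. For $U\subseteq X$ and a measure $\mu'$, $\mathrm{cov}_a((U,d,\mu'),r)=\min\{|F|:F\subseteq U,\ \mu'(U\cap B^d_r(F))>a\}$. $\mathrm{bicov}_a((X,d_1,d_2,\mu),\delta)=\min\{|F|:F\subseteq X,\ \mu(B^{d_2}_\delta(B^{d_1}_\delta(F)))>a\}$, and for $U\subseteq X$, $(U,d_1,d_2,\mu')$ means $U$ with restricted pseudometrics (balls inside $U$) and unnormalized restriction of $\mu'$. $\mathrm{BICOV}_{\alpha,\kappa,\kappa',\delta}(X,d_1,d_2,\mu)=\min_{\mu'}\max_{U:\mu'(U)\ge\kappa}\mathrm{bicov}_{\kappa'}((U,d_1,d_2,\mu'),\delta)$, min over Borel probabilities $\mu'$ with $\|d\mu'/d\mu\|_\infty\le\alpha$, max over Borel $U$. *)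

(* Defs.v *)
From HB Require Import structures.
From mathcomp Require Import all_boot all_order all_algebra.
From mathcomp Require Import finmap.
From mathcomp Require Import all_classical all_reals all_analysis.
Set Implicit Arguments. Unset Strict Implicit. Unset Printing Implicit Defensive.
Import Order.TTheory GRing.Theory Num.Theory.
Local Open Scope classical_set_scope.
Local Open Scope ring_scope.

Section Defs.
Context {R : realType}.

Definition is_metric (X : Type) (d : X -> X -> R) : Prop :=
  [/\ forall x y, 0 <= d x y,
      forall x y, d x y = 0 <-> x = y,
      forall x y, d x y = d y x &
      forall x y z, d x z <= d x y + d y z].

Definition dball (X : Type) (d : X -> X -> R) (r : R) (x : X) : set X :=
  [set y | d x y < r].

Definition dballs (X : Type) (d : X -> X -> R) (r : R) (F : set X) : set X :=
  \bigcup_(x in F) dball d r x.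

Definition d_open (X : Type) (d : X -> X -> R) (A : set X) : Prop :=
  forall x, A x -> exists2 r : R, 0 < r & dball d r x `<=` A.

Definition d_compact (X : Type) (d : X -> X -> R) : Prop :=
  forall (I : Type) (G : I -> set X), (forall i, d_open d (G i)) ->
    setT `<=` \bigcup_(i in setT) G i ->
    exists J : set I, finite_set J /\ setT `<=` \bigcup_(i in J) G i.

Definition borel_for (dsp : measure_display) (X : measurableType dsp)
    (d : X -> X -> R) : Prop :=
  (@measurable dsp X) = <<s [set A | d_open d A] >>.

Definition Tpow (X : Type) (T Tinv : X -> X) (n : int) : X -> X :=
  match n with
  | Posz k => iter k T
  | Negz k => iter k.+1 Tinv
  end.

Definition dX (X : Type) (T Tinv : X -> X) (d : X -> X -> R) (F : seq int)
    (x x' : X) : R :=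
  \sum_(n <- F) d (Tpow T Tinv n x) (Tpow T Tinv n x').

(* the integer intervals [-N;0) = {-N,...,-1} and [0;N) = {0,...,N-1} *)
Definition zint_neg (N : nat) : seq int := [seq - (k%:Z) | k <- iota 1 N].
Definition zint_pos (N : nat) : seq int := [seq k%:Z | k <- iota 0 N].

Definition T_invariant dsp (X : measurableType dsp) (T : X -> X)
    (mu : set X -> \bar R) : Prop :=
  forall A, measurable A -> mu (T @^-1` A) = mu A.

Definition T_ergodic dsp (X : measurableType dsp) (T : X -> X)
    (mu : set X -> \bar R) : Prop :=
  forall A, measurable A -> T @^-1` A = A -> mu A = 0%E \/ mu A = 1%E.

(* || d mu' / d mu ||_oo <= alpha : mu' has a density f w.r.t. mu
   (i.e. mu' << mu, f = d mu'/d mu) whose mu-essential sup is <= alpha *)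
Definition density_le dsp (X : measurableType dsp) (mu mu' : set X -> \bar R)
    (alpha : R) : Prop :=
  exists f : X -> R,
    [/\ measurable_fun setT f,
        forall x, 0 <= f x,
        {ae mu, forall x, f x <= alpha} &
        forall A, measurable A -> mu' A = (\int[mu]_(x in A) (f x)%:E)%E].

(* cov_a((U,d,mu'),r) = min{|F| : F ⊆ U, mu'(U ∩ B^d_r(F)) > a};
   balls are taken in the restricted space U. +oo if no such F. *)
Definition cov (X : choiceType) (U : set X) (d : X -> X -> R) (mu' : set X -> \bar R)
    (a r : R) : \bar R :=
  ereal_inf [set (#|` F|)%fset%:R%:E | F in
     [set F : {fset X} | [set` F] `<=` U /\ (a%:E < mu' (U `&` dballs d r [set` F]))%E]].

(* bicov_a((U,d1,d2,mu'),delta)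
   = min{|F| : F ⊆ U, mu'(B^{d2}_delta(B^{d1}_delta(F))) > a},
   with balls inside U (restricted pseudometrics). *)
Definition bicov (X : choiceType) (U : set X) (d1 d2 : X -> X -> R)
    (mu' : set X -> \bar R) (a delta : R) : \bar R :=
  ereal_inf [set (#|` F|)%fset%:R%:E | F in
     [set F : {fset X} | [set` F] `<=` U /\
        (a%:E < mu' (U `&` dballs d2 delta (U `&` dballs d1 delta [set` F])))%E]].

Definition minmax dsp (X : measurableType dsp) (mu : probability X R)
    (alpha kappa : R) (Q : set X -> (set X -> \bar R) -> \bar R) : \bar R :=
  ereal_inf [set ereal_sup [set Q U mu' | U in
                 [set U : set X | measurable U /\ (kappa%:E <= mu' U)%E]]
            | mu' in [set mu' : probability X R | density_le mu mu' alpha]].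

Definition BICOV dsp (X : measurableType dsp) (alpha kappa kappa' delta : R)
    (d1 d2 : X -> X -> R) (mu : probability X R) : \bar R :=
  minmax mu alpha kappa (fun U mu' => bicov U d1 d2 mu' kappa' delta).

End Defs.

(* Main.v *)
Require Import Defs.
From HB Require Import structures.
From mathcomp Require Import all_boot all_order all_algebra.
From mathcomp Require Import all_classical all_reals all_analysis.
From mathcomp Require Import lra.
Import Order.TTheory GRing.Theory Num.Theory.
Local Open Scope classical_set_scope.
Local Open Scope ring_scope.

Section Aux.
Variables (R : realType) (dsp : measure_display) (X : measurableType dsp).
Implicit Types (d : X -> X -> R).

Lemma minmax_mono (mu : probability X R) alpha kappa
  (Q1 Q2 : set X -> (set X -> \bar R) -> \bar R) :
  (forall U (mu' : probability X R), measurable U -> (Q1 U mu' <= Q2 U mu')%E) ->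
  (minmax mu alpha kappa Q1 <= minmax mu alpha kappa Q2)%E.
Proof.
move=> H; apply/ereal_infP => _ [mu' Hmu' <-].
apply: (@le_trans _ _ (ereal_sup [set Q1 U mu' | U in
   [set U : set X | measurable U /\ (kappa%:E <= mu' U)%E]])).
  by apply: ereal_inf_lbound; exists mu'.
apply/ereal_supP => _ [U [mU HU] <-].
apply: (le_trans (H U mu' mU)).
by apply: ereal_sup_ubound; exists U.
Qed.

Lemma dball_open d : is_metric d -> forall r x, d_open d (dball d r x).
Proof.
case=> d0 dE dC dT r x y; rewrite /dball /= => Hy.
exists (r - d x y); first by rewrite subr_gt0.
move=> z /=; rewrite /dball /= => Hz.
apply: (le_lt_trans (dT x y z)); by rewrite -ltrBrDl.
Qed.

Lemma dballs_meas d : is_metric d -> borel_for d -> forall r F,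
  measurable (dballs d r F).
Proof.
move=> Hm Hb r F; rewrite Hb; apply: sub_gen_smallest => y [x Fx Hy].
have [e e0 He] := @dball_open d Hm _ _ _ Hy.
exists e => // z Hz; exists x => //; exact: He.
Qed.

Lemma cov_le_bicov d : is_metric d -> borel_for d -> forall U (mu' : probability X R) a delta,
  measurable U -> (cov U d mu' a (2 * delta) <= bicov U d d mu' a delta)%E.
Proof.
move=> Hm Hb U mu' a delta mU.
apply/ereal_infP => _ [F [FU Ha] <-].
apply: ereal_inf_lbound; exists F => //; split => //.
apply: (lt_le_trans Ha); apply: le_measure; rewrite ?inE.
- by apply: measurableI => //; apply: dballs_meas.
- by apply: measurableI => //; apply: dballs_meas.
move=> y [Uy [z [Uz [f Ff Hz]] Hy]]; split => //; exists f => //.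
case: Hm => _ _ _ dT; rewrite /dball /= in Hz Hy *.
apply: (le_lt_trans (dT f z y)); lra.
Qed.

Lemma bicov_le_cov d : is_metric d -> borel_for d -> forall U (mu' : probability X R) a delta,
  0 < delta -> measurable U -> (bicov U d d mu' a delta <= cov U d mu' a delta)%E.
Proof.
move=> Hm Hb U mu' a delta dpos mU.
apply/ereal_infP => _ [F [FU Ha] <-].
apply: ereal_inf_lbound; exists F => //; split => //.
apply: (lt_le_trans Ha); apply: le_measure; rewrite ?inE.
- by apply: measurableI => //; apply: dballs_meas.
- by apply: measurableI => //; apply: dballs_meas.
move=> y [Uy Hy]; split => //; exists y => //.
case: Hm => _ dE _ _; rewrite /dball /=.
by have -> : d y y = 0 by apply/dE.
Qed.

Lemma Tpow_iso d (T Tinv : X -> X) : (forall x y, d (T x) (T y) = d x y) ->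
  cancel Tinv T -> forall n x y, d (Tpow T Tinv n x) (Tpow T Tinv n y) = d x y.
Proof.
move=> HT HTi.
have HI : forall x y, d (Tinv x) (Tinv y) = d x y by move=> x y; rewrite -HT !HTi.
case=> k x y /=.
  by elim: k => //= k IH; rewrite HT IH.
rewrite HI; elim: k => //= k IH; by rewrite HI IH.
Qed.

Lemma dX_eq d (T Tinv : X -> X) : (forall x y, d (T x) (T y) = d x y) ->
  cancel Tinv T -> forall s x y, dX T Tinv d s x y = (size s)%:R * d x y.
Proof.
move=> HT HTi s x y; rewrite /dX; elim: s => [|n s IH].
  by rewrite big_nil mul0r.
by rewrite big_cons IH Tpow_iso //= -add1n natrD mulrDl mul1r.
Qed.

Lemma dballs_scale d (N : nat) delta : (0 < N)%N -> forall A,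
  dballs (fun x y => N%:R * d x y) (delta * N%:R) A = dballs d delta A.
Proof.
move=> N0 A; rewrite /dballs /dball; apply/seteqP; split => y [x Ax H]; exists x => //=;
  move: H => /=; rewrite [delta * _]mulrC ltr_pM2l ?ltr0n //; exact: id.
Qed.

Lemma bicov_scale U d d1 d2 (mu' : set X -> \bar R) a r delta :
  (forall A, dballs d1 r A = dballs d delta A) ->
  (forall A, dballs d2 r A = dballs d delta A) ->
  bicov U d1 d2 mu' a r = bicov U d d mu' a delta.
Proof.
move=> E1 E2; rewrite /bicov; congr ereal_inf; congr image.
by apply/seteqP; split => F /=; rewrite E1 E2.
Qed.
End Aux.

Theorem mainTheorem7 (R : realType) (dsp : measure_display)
    (X : measurableType dsp) (d : X -> X -> R) (T Tinv : X -> X)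
    (mu : probability X R)
    (alpha delta kappa kappa' : R) (N : nat) :
  is_metric d -> d_compact d -> borel_for d ->
  (forall x y, d (T x) (T y) = d x y) ->
  cancel T Tinv -> cancel Tinv T ->
  T_invariant T mu -> T_ergodic T mu ->
  1 < alpha -> 0 < delta -> 0 < kappa' -> kappa' < kappa -> (0 < N)%N ->
  (minmax mu alpha kappa (fun U mu' => cov U d mu' kappa' (2 * delta))
     <= BICOV alpha kappa kappa' (delta * N%:R)
          (dX T Tinv d (zint_neg N)) (dX T Tinv d (zint_pos N)) mu
   /\ BICOV alpha kappa kappa' (delta * N%:R)
          (dX T Tinv d (zint_neg N)) (dX T Tinv d (zint_pos N)) mu
     <= minmax mu alpha kappa (fun U mu' => cov U d mu' kappa' delta))%E.
Proof.
move=> Hm _ Hb HT _ HTi _ _ _ dpos _ _ N0.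
have En : dX T Tinv d (zint_neg N) = fun x y => N%:R * d x y.
  by apply/funext => x; apply/funext => y; rewrite dX_eq // size_map size_iota.
have Ep : dX T Tinv d (zint_pos N) = fun x y => N%:R * d x y.
  by apply/funext => x; apply/funext => y; rewrite dX_eq // size_map size_iota.
have Es := @dballs_scale R dsp X d N delta N0.
rewrite /BICOV En Ep; split; apply: minmax_mono => U mu' mU;
  rewrite (@bicov_scale _ _ _ U d _ _ _ _ _ delta Es Es).
  exact: (@cov_le_bicov R dsp X d Hm Hb U mu' kappa' delta mU).
exact: (@bicov_le_cov R dsp X d Hm Hb U mu' kappa' delta dpos mU).
Qed.
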